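(* The natural map from the monoid $B_n^+$ to $B_n$ is injective: if two positive words in the band generators represent the same element of $B_n$, then they are positively equivalent.
   Context: $B_n$ is the $n$-string braid group with band generators $a_{ts}$ ($n\ge t>s\ge1$), where $a_{ts}=(\sigma_{t-1}\cdots\sigma_{s+1})\sigma_s(\sigma_{s+1}^{-1}\cdots\sigma_{t-1}^{-1})$. The band relations are: (R1) $a_{ts}a_{rq}=a_{rq}a_{ts}$ if $(t-r)(t-q)(s-r)(s-q)>0$; (R2) $a_{ts}a_{sr}=a_{tr}a_{ts}=a_{sr}a_{tr}$ for $n\ge t>s>r\ge1$. A positive word is a word in positive powers of the $a_{ts}$. Two positive words are positively equivalent if one can be transformed into the other by a finite sequence of single direct applications of relations (R1), (R2) to subwords. $B_n^+$ is the monoid with generators $a_{ts}$ and relations (R1), (R2), i.e. positive words modulo positive equivalence. *)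

(* Defs.v *)
From mathcomp Require Import all_boot all_order all_algebra.
From Stdlib Require Export Relation_Operators.
Set Implicit Arguments. Unset Strict Implicit. Unset Printing Implicit Defensive.
Import Order.TTheory GRing.Theory Num.Theory.

(* A letter (i, true) is sigma_i, (i, false) is sigma_i^{-1}. *)
Definition aword := seq (nat * bool).

Inductive artin_rel (n : nat) : aword -> aword -> Prop :=
| ar_cancel : forall i b, 1 <= i -> i < n ->
    artin_rel n [:: (i, b); (i, ~~ b)] [::]
| ar_comm : forall i j, 1 <= i -> i.+1 < j -> j < n ->
    artin_rel n [:: (i, true); (j, true)] [:: (j, true); (i, true)]
| ar_braid : forall i, 1 <= i -> i.+1 < n ->
    artin_rel n [:: (i, true); (i.+1, true); (i, true)]
                [:: (i.+1, true); (i, true); (i.+1, true)].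

Inductive artin_step (n : nat) : aword -> aword -> Prop :=
| as_step : forall p q l r, artin_rel n l r ->
    artin_step n (p ++ l ++ q) (p ++ r ++ q).

Definition braid_eq (n : nat) : aword -> aword -> Prop :=
  clos_refl_sym_trans aword (artin_step n).

(* a_{ts} = (sigma_{t-1} ... sigma_{s+1}) sigma_s (sigma_{s+1}^{-1} ... sigma_{t-1}^{-1}) *)
Definition band_artin (t s : nat) : aword :=
  [seq (k, true) | k <- rev (iota s.+1 (t.-1 - s))] ++ [:: (s, true)] ++
  [seq (k, false) | k <- iota s.+1 (t.-1 - s)].

(* A positive word in the band generators: the pair (t, s) stands for a_{ts}. *)
Definition bword := seq (nat * nat).

Definition valid_band (n : nat) (g : nat * nat) : bool :=
  (1 <= g.2) && (g.2 < g.1) && (g.1 <= n).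

Definition valid_bword (n : nat) (w : bword) : bool := all (valid_band n) w.

Definition bword_to_artin (w : bword) : aword := flatten [seq band_artin g.1 g.2 | g <- w].

Inductive band_rel (n : nat) : bword -> bword -> Prop :=
| br_R1 : forall t s r q,
    valid_band n (t, s) -> valid_band n (r, q) ->
    ((0 : int) < (t%:Z - r%:Z) * (t%:Z - q%:Z) * (s%:Z - r%:Z) * (s%:Z - q%:Z))%R ->
    band_rel n [:: (t, s); (r, q)] [:: (r, q); (t, s)]
| br_R2a : forall t s r, 1 <= r -> r < s -> s < t -> t <= n ->
    band_rel n [:: (t, s); (s, r)] [:: (t, r); (t, s)]
| br_R2b : forall t s r, 1 <= r -> r < s -> s < t -> t <= n ->
    band_rel n [:: (t, r); (t, s)] [:: (s, r); (t, r)]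
| br_R2c : forall t s r, 1 <= r -> r < s -> s < t -> t <= n ->
    band_rel n [:: (t, s); (s, r)] [:: (s, r); (t, r)].

Inductive band_step (n : nat) : bword -> bword -> Prop :=
| bs_step : forall p q l r, band_rel n l r ->
    band_step n (p ++ l ++ q) (p ++ r ++ q).

Definition pos_equiv (n : nat) : bword -> bword -> Prop :=
  clos_refl_sym_trans bword (band_step n).

(* Main.v *)
Require Import Defs.
From mathcomp Require Import all_boot all_order all_algebra.
From mathcomp Require Import zify ring.
From Stdlib Require Import Operators_Properties.
Set Implicit Arguments. Unset Strict Implicit. Unset Printing Implicit Defensive.

Definition f (a b : nat * nat) : seq (nat * nat) :=
  let: (t, s) := a in let: (r, q) := b in
  if (t == r) && (s == q) then [::]
  else if s == r then [:: b]
  else if q == t then [:: (r, s)]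
  else if t == r then (if q < s then [:: (s, q)] else [:: b])
  else if s == q then (if r < t then [:: (t, r)] else [:: b])
  else if [&& r < t, s < r & q < s] then [:: (t, r); (s, q)]
  else if [&& t < r, q < t & s < q] then [:: (r, s); (t, q)]
  else [:: b].

Ltac fsplit := repeat (case: ifP => /=); move=> *; try lia.

Lemma f_size a b : size (f a b) = size (f b a).
Proof. case: a b => t s [r q]; rewrite /f; fsplit. Qed.

Lemma f_valid n a b : valid_band n a -> valid_band n b -> all (valid_band n) (f a b).
Proof. case: a b => t s [r q]; rewrite /valid_band /f /=; fsplit. Qed.

Lemma f_self a : f a a = [::].
Proof. case: a => t s; by rewrite /f !eqxx. Qed.

Definition stp n (u v : bword) : Prop :=
  exists p q a b, [/\ a != b, valid_band n a, valid_band n b,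
     u = p ++ (a :: f a b) ++ q & v = p ++ (b :: f b a) ++ q].

Definition eqv n := clos_refl_trans bword (stp n).

Lemma stp_sym n u v : stp n u v -> stp n v u.
Proof. move=> [p [q [a [b [ab va vb -> ->]]]]]. exists p, q, b, a; split => //. by rewrite eq_sym. Qed.

Lemma eqv_refl n u : eqv n u u.
Proof. exact: rt_refl. Qed.
Lemma eqv_trans n u v w : eqv n u v -> eqv n v w -> eqv n u w.
Proof. exact: rt_trans. Qed.
Lemma eqv_sym n u v : eqv n u v -> eqv n v u.
Proof.
elim=> [x y /stp_sym H|x|x y z _ H1 _ H2]; [exact: rt_step| exact: rt_refl| exact: rt_trans H2 H1].
Qed.

Lemma stp_ctx n P Q u v : stp n u v -> stp n (P ++ u ++ Q) (P ++ v ++ Q).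
Proof.
move=> [p [q [a [b [ab va vb -> ->]]]]]. exists (P ++ p), (q ++ Q), a, b; split => //;
by rewrite -!catA.
Qed.

Lemma eqv_ctx n P Q u v : eqv n u v -> eqv n (P ++ u ++ Q) (P ++ v ++ Q).
Proof.
elim=> [x y H|x|x y z _ H1 _ H2]; [apply: rt_step; exact: stp_ctx | exact: rt_refl | exact: rt_trans H2].
Qed.

Lemma eqv_cat n u u' v v' : eqv n u u' -> eqv n v v' -> eqv n (u ++ v) (u' ++ v').
Proof.
move=> H1 H2; apply: (@eqv_trans _ _ (u' ++ v)).
  by have H := eqv_ctx [::] v H1.
have H := eqv_ctx u' [::] H2; by rewrite !cats0 in H.
Qed.

Lemma eqv_catl n P u v : eqv n u v -> eqv n (P ++ u) (P ++ v).
Proof. move=> H; apply: eqv_cat => //; exact: eqv_refl. Qed.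
Lemma eqv_catr n Q u v : eqv n u v -> eqv n (u ++ Q) (v ++ Q).
Proof. move=> H; apply: eqv_cat => //; exact: eqv_refl. Qed.
Lemma eqv_cons n x u v : eqv n u v -> eqv n (x :: u) (x :: v).
Proof. exact: (@eqv_catl n [:: x]). Qed.

Lemma stp_size n u v : stp n u v -> size u = size v.
Proof. move=> [p [q [a [b [ab va vb -> ->]]]]]. by rewrite !size_cat /= f_size. Qed.

Lemma eqv_size n u v : eqv n u v -> size u = size v.
Proof. elim=> [x y /stp_size //|//|x y z _ H1 _ H2]; by rewrite H1. Qed.

Lemma eqv_rel n a b : a != b -> valid_band n a -> valid_band n b ->
  eqv n (a :: f a b) (b :: f b a).
Proof. move=> ab va vb; apply: rt_step; exists [::], [::], a, b; split => //; by rewrite cats0. Qed.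

Fixpoint rcomp (fuel : nat) (P Q : bword) : option (bword * bword) :=
  if fuel is fu.+1 then
    match P, Q with
    | [::], _ => Some (Q, [::])
    | _, [::] => Some ([::], P)
    | a :: P1, b :: Q1 =>
      if a == b then rcomp fu P1 Q1 else
      match rcomp fu (f b a) Q1 with
      | Some (A, B) => match rcomp fu P1 (f a b ++ A) with
                       | Some (C, D) => Some (C, B ++ D) | None => None end
      | None => None end
    end
  else None.

Lemma comp_grid n fu P Q R S : rcomp fu P Q = Some (R, S) ->
  all (valid_band n) P -> all (valid_band n) Q ->
  [/\ all (valid_band n) R, all (valid_band n) S & eqv n (P ++ R) (Q ++ S)].
Proof.
elim: fu P Q R S => // fu IH [|a P1] [|b Q1] R S /=.
- by case=> <- <- vP vQ; split => //; rewrite ?cats0; exact: eqv_refl.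
- by case=> <- <- vP vQ; split => //; rewrite ?cats0; exact: eqv_refl.
- by case=> <- <- vP vQ; split => //; rewrite ?cats0; exact: eqv_refl.
move=> + /andP[va vP] /andP[vb vQ].
case: eqP => [<-|/eqP ab].
  move=> /IH /(_ vP vQ) [vR vS H]; split => //; exact: eqv_cons.
case E1: (rcomp fu (f b a) Q1) => [[A B]|//].
case E2: (rcomp fu P1 (f a b ++ A)) => [[C D]|//] [<- <-].
have [vA vB H1] := IH _ _ _ _ E1 (f_valid vb va) vQ.
have vfA : all (valid_band n) (f a b ++ A) by rewrite all_cat f_valid.
have [vC vD H2] := IH _ _ _ _ E2 vP vfA.
split => //; first by rewrite all_cat vB.
apply: (@eqv_trans _ _ (a :: f a b ++ A ++ D)).
  by apply: eqv_cons; rewrite catA.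
apply: (@eqv_trans _ _ (b :: f b a ++ A ++ D)).
  by rewrite !catA -!cat_cons; do 2 apply: eqv_catr; exact: eqv_rel.
by apply: eqv_cons; rewrite !catA; apply: eqv_catr.
Qed.

Section Transport.
Variable g : nat * nat -> nat * nat.
Hypothesis ginj : injective g.
Hypothesis gf : forall a b, f (g a) (g b) = map g (f a b).

Lemma comp_map fu P Q : rcomp fu (map g P) (map g Q) =
  omap (fun p => (map g p.1, map g p.2)) (rcomp fu P Q).
Proof.
elim: fu P Q => // fu IH [|a P1] [|b Q1] //=.
rewrite (inj_eq ginj); case: eqP => // _.
rewrite gf IH; case: (rcomp fu (f b a) Q1) => [[A B]|//] /=.
rewrite gf -map_cat IH; case: (rcomp fu P1 (f a b ++ A)) => [[C D]|//] /=.
by rewrite map_cat.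
Qed.
End Transport.


Definition Hl n L := forall x y U V, size U < L -> eqv n (x :: U) (y :: V) ->
  (x = y /\ eqv n U V) \/
  [/\ x <> y, valid_band n x, valid_band n y &
      exists W, eqv n U (f x y ++ W) /\ eqv n V (f y x ++ W)].

Lemma comp_sound n L : Hl n L -> forall fu P Q R S W1 W2,
  rcomp fu P Q = Some (R, S) -> eqv n (P ++ W1) (Q ++ W2) -> size (P ++ W1) <= L ->
  exists W, eqv n W1 (R ++ W) /\ eqv n W2 (S ++ W).
Proof.
move=> HL; elim=> // fu IH [|a P1] [|b Q1] R S W1 W2 /=.
- by case=> <- <- H _; exists W2; split => //; exact: eqv_refl.
- by case=> <- <- H _; exists W2; split => //; exact: eqv_refl.
- by case=> <- <- H _; exists W1; split; [exact: eqv_refl | exact: eqv_sym].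
move=> + H Hs.
have [[ab H']|[ab va vb [W [HW1 HW2]]]] := HL _ _ _ _ Hs H.
  rewrite ab eqxx => E; exact: IH E H' (ltnW Hs).
move/eqP/negPf: ab => ->.
case E1: (rcomp fu (f b a) Q1) => [[A B]|//].
case E2: (rcomp fu P1 (f a b ++ A)) => [[C D]|//] [<- <-].
have Hs2 : size (f b a ++ W) <= L.
  rewrite -(eqv_size HW2); have := eqv_size H; rewrite /= => [[<-]]; exact: ltnW.
have [W' [HA HB]] := IH _ _ _ _ _ _ E1 (eqv_sym HW2) Hs2.
have H2 : eqv n (P1 ++ W1) ((f a b ++ A) ++ W').
  apply: eqv_trans HW1 _; rewrite -catA; exact: eqv_catl.
have Hs3 : size (P1 ++ W1) <= L by exact: ltnW.
have [W'' [HC HD]] := IH _ _ _ _ _ _ E2 H2 Hs3.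
exists W''; split => //.
apply: eqv_trans HB _; rewrite -catA; exact: eqv_catl.
Qed.

Definition cube_prop n := forall x y z, valid_band n x -> valid_band n y ->
  valid_band n z -> z != x -> z != y ->
  exists A B T, [/\ rcomp 40 (f z x) (f z y) = Some (A, B),
     rcomp 40 (f x y) (f x z ++ A) = Some (T, [::]) &
     rcomp 40 (f y x ++ T) (f y z ++ B) = Some ([::], [::])].

Lemma Hl_all n : cube_prop n -> forall L, Hl n L.
Proof.
move=> cube; elim=> [//|L HL] x y U V HU H.
have key : forall w, clos_refl_trans_n1 _ (stp n) (x :: U) w -> forall y V, w = y :: V ->
  (x = y /\ eqv n U V) \/ [/\ x <> y, valid_band n x, valid_band n y &
     exists W, eqv n U (f x y ++ W) /\ eqv n V (f y x ++ W)].
  move=> w; elim=> [|w1 w2 Hst Hc IH] y' V' E.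
    case: E => <- <-; left; split => //; exact: eqv_refl.
  have Hrt : eqv n (x :: U) w1 := clos_rtn1_rt _ _ _ _ Hc.
  case: w1 Hst Hc IH Hrt => [|z Z] Hst Hc IH Hrt; first by have := eqv_size Hrt.
  have {}IH := IH z Z erefl.
  have HsZ : size Z = size U by have := eqv_size Hrt; case.
  move: Hst => [p [q [a [b [ab va vb E1 E2]]]]].
  rewrite E in E2.
  case: p E1 E2 => [|c p] /= [Ez EZ] [Ey EV].
    subst z Z y' V'.
    case: IH => [[xa HUZ]|[xa vx _ [W [HW1 HW2]]]].
      right; split => //; first by move=> xb; move: ab; rewrite -xa xb eqxx.
        by rewrite xa.
      exists q; rewrite xa; split => //; exact: eqv_refl.
    have ax : a != x by apply/eqP => E'; apply: xa.
    have [A [B [T [C1 C2 C3]]]] := cube x b a vx vb va ax ab.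
    have Hs : size (f a x ++ W) <= L.
      by rewrite -(eqv_size HW2) HsZ -ltnS.
    have [Ws [HWs Hq]] := comp_sound HL C1 (eqv_sym HW2) Hs.
    have [vA vB G1] := comp_grid C1 (f_valid va vx) (f_valid va vb).
    have vxaA : all (valid_band n) (f x a ++ A) by rewrite all_cat f_valid.
    have [vT _ G2] := comp_grid C2 (f_valid vx vb) vxaA.
    have vbxT : all (valid_band n) (f b x ++ T) by rewrite all_cat f_valid.
    have vbaB : all (valid_band n) (f b a ++ B) by rewrite all_cat f_valid.
    have [_ _ G3] := comp_grid C3 vbxT vbaB.
    rewrite cats0 in G2; rewrite !cats0 in G3.
    have HU' : eqv n U (f x b ++ T ++ Ws).
      apply: eqv_trans HW1 _; apply: (@eqv_trans _ _ (f x a ++ A ++ Ws)).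
        exact: eqv_catl.
      rewrite !catA; apply: eqv_catr; exact: eqv_sym.
    have HV' : eqv n (f b a ++ q) (f b x ++ T ++ Ws).
      apply: (@eqv_trans _ _ (f b a ++ B ++ Ws)); first exact: eqv_catl.
      rewrite !catA; apply: eqv_catr; exact: eqv_sym.
    case: (eqVneq x b) => [xb|xnb].
      subst x; left; split => //; rewrite f_self /= in HU' HV'.
      exact: eqv_trans HU' (eqv_sym HV').
    right; split => //; first exact/eqP.
    by exists (T ++ Ws).
  subst z Z y' V'.
  have HZV : eqv n (p ++ a :: f a b ++ q) (p ++ b :: f b a ++ q).
    apply: rt_step; exists p, q, a, b; split => //.
  case: IH => [[xc HUZ]|[xc vx vc [W [HW1 HW2]]]].
    left; split => //; exact: eqv_trans HUZ HZV.
  right; split => //; exists W; split => //.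
  exact: eqv_trans (eqv_sym HZV) HW2.
exact: key _ (clos_rt_rtn1 _ _ _ _ H) _ _ erefl.
Qed.

Lemma eqv_cancel n : cube_prop n -> forall x U V, eqv n (x :: U) (x :: V) -> eqv n U V.
Proof.
move=> cube x U V H.
have [[_ //]|[//]] := Hl_all cube (ltnSn (size U)) H.
Qed.

Definition cube_ok (x y z : nat * nat) : bool :=
  match rcomp 40 (f z x) (f z y) with
  | Some (A, B) => match rcomp 40 (f x y) (f x z ++ A) with
     | Some (T, [::]) => rcomp 40 (f y x ++ T) (f y z ++ B) == Some ([::], [::])
     | _ => false end
  | None => false end.

Definition G6 : seq (nat * nat) :=
  [seq (t, s) | t <- iota 1 6, s <- [seq s <- iota 1 6 | s < t]].

Lemma cube6 : all (fun x => all (fun y => all (fun z => (z == x) || (z == y) || cube_ok x y z) G6) G6) G6.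
Proof. by vm_compute. Qed.

Lemma memG6 t s : 0 < s -> s < t -> t <= 6 -> (t, s) \in G6.
Proof.
move=> h1 h2 h3.
have : t \in iota 1 6 by rewrite mem_iota; lia.
have : s \in iota 1 6 by rewrite mem_iota; lia.
move: h2; rewrite /G6 => h2 Hs Ht.
apply/flatten_mapP; exists t => //.
apply/mapP; exists s => //; by rewrite mem_filter h2.
Qed.

Section Mono.
Variable h : nat -> nat.
Hypothesis hh : forall i j, i < j -> h i < h j.

Lemma hmono i j : (h i < h j) = (i < j).
Proof.
case: (ltngtP i j) => [/hh -> //| /hh ji| ->]; last by rewrite !ltnn.
by rewrite ltnNge (ltnW ji).
Qed.

Lemma hinj : injective h.
Proof. by move=> i j E; case: (ltngtP i j) => // /hh; rewrite E ltnn. Qed.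

Definition gh (a : nat * nat) := (h a.1, h a.2).

Lemma ghinj : injective gh.
Proof. move=> [a1 a2] [b1 b2] [/hinj -> /hinj ->] //. Qed.

Lemma ghf a b : f (gh a) (gh b) = map gh (f a b).
Proof.
case: a b => t s [r q]; rewrite /f /gh /= !(inj_eq hinj) !hmono.
by rewrite !(fun_if (map gh)).
Qed.
End Mono.

Definition SE (E : seq nat) := sort leq (undup E).
Definition hS (E : seq nat) i :=
  if i == 0 then 0 else if i <= size (SE E) then nth 0 (SE E) i.-1
  else last 0 (SE E) + (i - size (SE E)).

Lemma SE_sorted E : sorted ltn (SE E).
Proof. by rewrite ltn_sorted_uniq_leq sort_uniq undup_uniq sort_sorted //; exact: leq_total. Qed.

Lemma mem_SE E p : (p \in SE E) = (p \in E).
Proof. by rewrite mem_sort mem_undup. Qed.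

Lemma hS_step E : all (fun p => 0 < p) E -> E != [::] -> forall i, hS E i < hS E i.+1.
Proof.
move=> Ep En i.
have mpos : 0 < size (SE E).
  rewrite lt0n size_eq0; apply/eqP => S0; move: En.
  case: E Ep S0 => //= a E' _ S0; have : a \in SE (a :: E') by rewrite mem_SE inE eqxx.
  by rewrite S0.
rewrite /hS /=.
case: (posnP i) => [->|ip].
  rewrite mpos /=; have : nth 0 (SE E) 0 \in E by rewrite -mem_SE mem_nth.
  by move/(allP Ep).
case: (ltnP i (size (SE E))) => [im|mi].
  rewrite ?(ltnW im) ?im /=.
  have := sorted_ltn_nth ltn_trans 0 (SE_sorted E).
  move=> /(_ i.-1 i); rewrite !inE; apply; lia.
rewrite ?ltnNge ?mi /=.
case: (ltngtP i (size (SE E))) => [|iS|iS]; first lia.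
  lia.
rewrite iS -nth_last; lia.
Qed.

Lemma hS_c E p : p \in E -> hS E (index p (SE E)).+1 = p.
Proof.
move=> pE; rewrite /hS /=.
have pS : p \in SE E by rewrite mem_SE.
by rewrite index_mem pS nth_index.
Qed.

Lemma c_bound E p : p \in E -> (index p (SE E)).+1 <= size E.
Proof.
move=> pE; have pS : p \in SE E by rewrite mem_SE.
have := index_mem p (SE E); rewrite pS => H.
apply: leq_trans H _; rewrite size_sort; exact: size_undup.
Qed.

Lemma cube_all n : cube_prop n.
Proof.
move=> x y z vx vy vz zx zy.
pose E := [:: x.1; x.2; y.1; y.2; z.1; z.2].
have Ep : all (fun p => 0 < p) E.
  move: vx vy vz; rewrite /valid_band /= => /andP[/andP[? ?] ?] /andP[/andP[? ?] ?] /andP[/andP[? ?] ?].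
  apply/and5P; split => //; [lia|lia| apply/andP; split; lia].
have hh := homo_ltn ltn_trans (hS_step Ep isT).
pose c p := (index p (SE E)).+1.
pose g := gh (hS E).
have gi : injective g := ghinj hh.
have gf : forall a b, f (g a) (g b) = map g (f a b) := ghf hh.
have lift : forall w, valid_band n w -> w.1 \in E -> w.2 \in E ->
    exists2 w0, w0 \in G6 & g w0 = w.
  move=> [t s] vw /= tE sE; exists (c t, c s); last by rewrite /g /gh /= !hS_c.
  apply: memG6 => //; last exact: c_bound.
  rewrite -(hmono hh) /c !hS_c //. by case/andP: vw => /andP[].
have [x0 X0 gx] : exists2 w0, w0 \in G6 & g w0 = x by apply: lift; rewrite ?inE ?eqxx ?orbT.
have [y0 Y0 gy] : exists2 w0, w0 \in G6 & g w0 = y by apply: lift; rewrite ?inE ?eqxx ?orbT.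
have [z0 Z0 gz] : exists2 w0, w0 \in G6 & g w0 = z by apply: lift; rewrite ?inE ?eqxx ?orbT.
have := cube6; move/allP/(_ x0 X0)/allP/(_ y0 Y0)/allP/(_ z0 Z0).
have -> : (z0 == x0) = false by apply/negbTE; apply: contra zx; rewrite -gx -gz => /eqP ->.
have -> : (z0 == y0) = false by apply/negbTE; apply: contra zy; rewrite -gy -gz => /eqP ->.
rewrite !orFb /cube_ok.
case E1: (rcomp 40 (f z0 x0) (f z0 y0)) => [[A B]|//].
case E2: (rcomp 40 (f x0 y0) (f x0 z0 ++ A)) => [[T [|? ?]]|//] // /eqP E3.
exists (map g A), (map g B), (map g T).
rewrite -gx -gy -gz !gf -!map_cat !(comp_map gi gf) E1 E2 E3; by split.
Qed.

Lemma eqv_cancelx n x U V : eqv n (x :: U) (x :: V) -> eqv n U V.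
Proof. exact: (eqv_cancel (@cube_all n)). Qed.

Ltac fv := rewrite /f; repeat (case: ifP => /=); move=> *; first [done | exfalso; lia].

Lemma fR2a t s r : r < s < t -> f (t, s) (t, r) = [:: (s, r)] /\ f (t, r) (t, s) = [:: (t, s)].
Proof. move=> H; split; fv. Qed.
Lemma fR2b t s r : r < s < t -> f (t, r) (s, r) = [:: (t, s)] /\ f (s, r) (t, r) = [:: (t, r)].
Proof. move=> H; split; fv. Qed.
Lemma fR2c t s r : r < s < t -> f (t, s) (s, r) = [:: (s, r)] /\ f (s, r) (t, s) = [:: (t, r)].
Proof. move=> H; split; fv. Qed.
Lemma fX t s r q : q < s < r -> r < t -> f (t, s) (r, q) = [:: (t, r); (s, q)] /\ f (r, q) (t, s) = [:: (t, q); (r, s)].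
Proof. move=> H1 H2; split; fv. Qed.
Lemma fC t s r q : s < t -> q < r -> t != r -> s != r -> q != t -> s != q ->
  ~~ [&& r < t, s < r & q < s] -> ~~ [&& t < r, q < t & s < q] ->
  f (t, s) (r, q) = [:: (r, q)] /\ f (r, q) (t, s) = [:: (t, s)].
Proof. move=> *; split; fv. Qed.

Definition vb n (a : nat * nat) := valid_band n a.

Lemma vbP n t s : valid_band n (t, s) -> [/\ 0 < s, s < t & t <= n].
Proof. by rewrite /valid_band /= => /andP[/andP[? ?] ?]. Qed.

Ltac vbt := rewrite /valid_band /=; lia.
Ltac neqt := rewrite xpair_eqE; lia.

Lemma eR2a n t s r : 0 < r -> r < s -> s < t -> t <= n ->
  eqv n [:: (t, s); (s, r)] [:: (t, r); (t, s)].
Proof.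
move=> h1 h2 h3 h4; have H : r < s < t by rewrite h2 h3.
have [E1 E2] := fR2a H.
have := @eqv_rel n (t, s) (t, r) ltac:(neqt) ltac:(vbt) ltac:(vbt).
by rewrite E1 E2.
Qed.
Lemma eR2b n t s r : 0 < r -> r < s -> s < t -> t <= n ->
  eqv n [:: (t, r); (t, s)] [:: (s, r); (t, r)].
Proof.
move=> h1 h2 h3 h4; have H : r < s < t by rewrite h2 h3.
have [E1 E2] := fR2b H.
have := @eqv_rel n (t, r) (s, r) ltac:(neqt) ltac:(vbt) ltac:(vbt).
by rewrite E1 E2.
Qed.
Lemma eR2c n t s r : 0 < r -> r < s -> s < t -> t <= n ->
  eqv n [:: (t, s); (s, r)] [:: (s, r); (t, r)].
Proof.
move=> h1 h2 h3 h4; have H : r < s < t by rewrite h2 h3.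
have [E1 E2] := fR2c H.
have := @eqv_rel n (t, s) (s, r) ltac:(neqt) ltac:(vbt) ltac:(vbt).
by rewrite E1 E2.
Qed.

Section PP.
Import GRing.Theory Num.Theory.

Lemma pos_pair (a b : int) : ((0 < a) && (0 < b))%R || ((a < 0) && (b < 0))%R -> (0 < a * b)%R.
Proof. case/orP=> /andP[ha hb]; [exact: mulr_gt0 | by rewrite nmulr_rgt0]. Qed.

Lemma prod_pos t s r q : s < t -> q < r -> t != r -> s != r -> q != t -> s != q ->
  ~~ [&& r < t, s < r & q < s] -> ~~ [&& t < r, q < t & s < q] ->
  ((0 : int) < (t%:Z - r%:Z) * (t%:Z - q%:Z) * (s%:Z - r%:Z) * (s%:Z - q%:Z))%R.
Proof.
move=> *.
have E1 : ((t%:Z - r%:Z) * (t%:Z - q%:Z) * (s%:Z - r%:Z) * (s%:Z - q%:Z) =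
   ((t%:Z - r%:Z) * (t%:Z - q%:Z)) * ((s%:Z - r%:Z) * (s%:Z - q%:Z)))%R by ring.
have E2 : ((t%:Z - r%:Z) * (t%:Z - q%:Z) * (s%:Z - r%:Z) * (s%:Z - q%:Z) =
   ((t%:Z - r%:Z) * (s%:Z - r%:Z)) * ((t%:Z - q%:Z) * (s%:Z - q%:Z)))%R by ring.
have : [|| r < s, t < q, (r < t) && (s < q) | (t < r) && (q < s)] by lia.
case/or4P=> H.
- rewrite E1; apply: mulr_gt0; apply: pos_pair; apply/orP; lia.
- rewrite E1; apply: mulr_gt0; apply: pos_pair; apply/orP; lia.
- rewrite E1; apply: mulr_gt0; apply: pos_pair; apply/orP; lia.
- rewrite E2; apply: mulr_gt0; apply: pos_pair; apply/orP; lia.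
Qed.

End PP.

Lemma pe_rel n p Q l r : band_rel n l r -> pos_equiv n (p ++ l ++ Q) (p ++ r ++ Q).
Proof. move=> H; apply: rst_step; exact: bs_step. Qed.

Lemma pe_sym n u v : pos_equiv n u v -> pos_equiv n v u.
Proof. exact: rst_sym. Qed.
Lemma pe_trans n u v w : pos_equiv n u v -> pos_equiv n v w -> pos_equiv n u w.
Proof. exact: rst_trans. Qed.

Lemma pe_cross n p Q t r s q : 0 < q -> q < s -> s < r -> r < t -> t <= n ->
  pos_equiv n (p ++ [:: (t, s); (t, r); (s, q)] ++ Q) (p ++ [:: (r, q); (t, q); (r, s)] ++ Q).
Proof.
move=> h0 h1 h2 h3 h4.
have H1 := @pe_rel n p ((s, q) :: Q) _ _ (@br_R2a n t r s ltac:(lia) h2 h3 h4).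
have H2 := @pe_rel n (p ++ [:: (t, r)]) Q _ _ (@br_R2a n r s q h0 h1 h2 ltac:(lia)).
have H3 := @pe_rel n p ((r, s) :: Q) _ _ (@br_R2c n t r q h0 ltac:(lia) h3 h4).
rewrite -!catA /= in H1 H2 H3 *.
apply: pe_trans (pe_sym H1) _; exact: pe_trans H2 H3.
Qed.

Lemma stp_pos n u v : stp n u v -> pos_equiv n u v.
Proof.
move=> [p [Q [[t s] [[r q] [ab va vb -> ->]]]]].
case/vbP: va => s0 st tn; case/vbP: vb => q0 qr rn.
have R1 : forall l r, band_rel n l r -> pos_equiv n (p ++ l ++ Q) (p ++ r ++ Q).
  by move=> l r'; exact: pe_rel.
case: (eqVneq t r) => [Etr|tr].
  subst r; case: (ltngtP s q) => [sq|qs|Esq]; last by move: ab; rewrite Esq eqxx.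
  - have HH : s < q < t by rewrite sq qr.
    have [E1 E2] := fR2a HH.
    rewrite E1 E2; apply: pe_sym; apply: R1; exact: br_R2a.
  - have HH : q < s < t by rewrite qs st.
    have [E1 E2] := fR2a HH.
    rewrite E1 E2; apply: R1; exact: br_R2a.
case: (eqVneq s q) => [Esq|sq].
  subst q; case: (ltngtP r t) => [rt|tr'|Ert]; last by move: tr; rewrite Ert eqxx.
  - have HH : s < r < t by rewrite qr rt.
    have [E1 E2] := fR2b HH.
    rewrite E1 E2; apply: R1; exact: br_R2b.
  - have HH : s < t < r by rewrite st tr'.
    have [E1 E2] := fR2b HH.
    rewrite E2 E1; apply: pe_sym; apply: R1; exact: br_R2b.
case: (eqVneq s r) => [Esr|sr].
  subst r; have HH : q < s < t by rewrite qr st.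
    have [E1 E2] := fR2c HH.
  rewrite E1 E2; apply: R1; exact: br_R2c.
case: (eqVneq q t) => [Eqt|qt].
  subst q; have HH : s < t < r by rewrite st qr.
    have [E1 E2] := fR2c HH.
  rewrite E2 E1; apply: pe_sym; apply: R1; exact: br_R2c.
case X1: [&& r < t, s < r & q < s].
  have HH : q < s < r by lia.
  have HH2 : r < t by lia.
  have [E1 E2] := fX HH HH2.
  rewrite E1 E2 /=; apply: pe_cross; lia.
case X2: [&& t < r, q < t & s < q].
  have HH : s < q < t by lia.
  have HH2 : t < r by lia.
  have [E1 E2] := fX HH HH2.
  rewrite E1 E2 /=; apply: pe_sym; apply: pe_cross; lia.
have [E1 E2] := fC st qr tr sr qt sq (negbT X1) (negbT X2).
rewrite E1 E2; apply: R1 => /=.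
apply: br_R1; rewrite /valid_band /=; try lia.
exact: prod_pos (negbT X1) (negbT X2).
Qed.

Lemma eqv_pos n u v : eqv n u v -> pos_equiv n u v.
Proof.
elim=> [x y /stp_pos //|x|x y z _ H1 _ H2]; [exact: rst_refl | exact: pe_trans H1 H2].
Qed.

Definition sg (i : nat) := (i.+1, i).
Definition dw j k := [seq sg i | i <- rev (iota j (k - j))].
Definition delta n := dw 1 n.
Definition tau n (a : nat * nat) := if a.1 < n then (a.1.+1, a.2.+1) else (a.2.+1, 1).
Definition pw (W : bword) k := flatten (nseq k W).

Lemma pwS W k : pw W k.+1 = W ++ pw W k.
Proof. by []. Qed.
Lemma pwD W a b : pw W a ++ pw W b = pw W (a + b).
Proof. by elim: a => //= a IH; rewrite -catA IH. Qed.
Lemma pwSr W k : pw W k.+1 = pw W k ++ W.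
Proof. by rewrite -addn1 -pwD /pw /= cats0. Qed.

Lemma dw_split j m k : j <= m <= k -> dw j k = dw m k ++ dw j m.
Proof.
move=> /andP[jm mk]; rewrite /dw -map_cat -rev_cat.
have -> : k - j = (m - j) + (k - m) by lia.
by rewrite iotaD; congr (map _ (rev (_ ++ iota _ _))); lia.
Qed.

Lemma dw_cons j k : j <= k -> dw j k.+1 = sg k :: dw j k.
Proof.
move=> jk; rewrite (@dw_split j k k.+1) ?jk ?leqnSn //.
by rewrite {1}/dw subSnn.
Qed.

Lemma dw_rcons j k : j < k -> dw j k = dw j.+1 k ++ [:: sg j].
Proof.
move=> jk; rewrite (@dw_split j j.+1 k) ?jk ?leqnSn //.
by rewrite /dw subSnn.
Qed.

Lemma dw_nil j : dw j j = [::].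
Proof. by rewrite /dw subnn. Qed.

Lemma rot1 n j k : 0 < j -> j < k -> k <= n -> eqv n (dw j k) ((k, j) :: dw j.+1 k).
Proof.
move=> j0; elim: k => // k IH jk kn.
rewrite dw_cons ?(ltnW jk) //.
have [jk'|Ejk] : j < k \/ j = k by lia.
2: by subst k; rewrite !dw_nil; exact: eqv_refl.
rewrite dw_cons //.
apply: eqv_trans (eqv_cons _ (IH jk' (ltnW kn))) _.
have := @eR2a n k.+1 k j j0 jk' (ltnSn k) kn.
move=> H; exact: (eqv_catr (dw j.+1 k) H).
Qed.

Lemma rot2 n j k : 0 < j -> j < k -> k <= n -> eqv n (dw j k) (dw j k.-1 ++ [:: (k, j)]).
Proof.
move=> j0 jk kn.
have : k - j.+1 <= k - j.+1 by [].
move: {2}(k - j.+1) => m; elim: m j j0 jk => [|m IH] j j0 jk hm.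
  have -> : k = j.+1 by lia.
  by rewrite dw_cons // dw_nil /=; exact: eqv_refl.
have [jk'|Ek] : j.+1 < k \/ j.+1 = k by lia.
2: by rewrite -Ek dw_cons // dw_nil /=; exact: eqv_refl.
rewrite dw_rcons // (@dw_rcons j k.-1); last by lia.
apply: (@eqv_trans _ _ ((dw j.+1 k.-1 ++ [:: (k, j.+1)]) ++ [:: sg j])).
  apply: eqv_catr; apply: IH => //; lia.
rewrite -!catA; apply: eqv_catl => /=.
apply: eR2c => //; lia.
Qed.

Lemma comm_sg n i j : 0 < i -> i.+1 < j -> j < n -> eqv n [:: sg i; sg j] [:: sg j; sg i].
Proof.
move=> h1 h2 h3.
have [E1 E2] := @fC i.+1 i j.+1 j (ltnSn i) (ltnSn j) ltac:(lia) ltac:(lia) ltac:(lia) ltac:(lia) ltac:(lia) ltac:(lia).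
have := @eqv_rel n (sg i) (sg j) ltac:(rewrite /sg; neqt) ltac:(rewrite /sg; vbt) ltac:(rewrite /sg; vbt).
by rewrite /sg E1 E2.
Qed.

Lemma comm_word n x W : (forall y, y \in W -> eqv n [:: x; y] [:: y; x]) ->
  eqv n (x :: W) (W ++ [:: x]).
Proof.
elim: W => [|y W IH] H /=; first exact: eqv_refl.
apply: (@eqv_trans _ _ (y :: x :: W)).
  by have := eqv_catr W (H y (mem_head _ _)).
apply: eqv_cons; apply: IH => z zW; apply: H; by rewrite inE zW orbT.
Qed.

Lemma mem_dw y j k : y \in dw j k -> exists2 i, j <= i < k & y = sg i.
Proof.
case/mapP=> i; rewrite mem_rev mem_iota => H ->; exists i => //; lia.
Qed.

Lemma braid n k : 0 < k -> k.+2 <= n ->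
  eqv n [:: sg k; sg k.+1; sg k] [:: sg k.+1; sg k; sg k.+1].
Proof.
move=> k0 kn; rewrite /sg.
apply: (@eqv_trans _ _ [:: (k.+1, k); (k.+2, k); (k.+2, k.+1)]).
  apply: eqv_cons; apply: eR2a => //.
have := eqv_catr [:: (k.+2, k.+1)] (eqv_sym (@eR2c n k.+2 k.+1 k k0 (ltnSn k) (ltnSn _) kn)).
by [].
Qed.

Lemma tw_sg n k : 0 < k -> k.+2 <= n -> eqv n (sg k :: delta n) (delta n ++ [:: sg k.+1]).
Proof.
move=> k0 kn.
have E : delta n = dw k.+2 n ++ [:: sg k.+1; sg k] ++ dw 1 k.
  rewrite /delta (@dw_split 1 k.+2 n); last by lia.
  by rewrite dw_cons // dw_cons.
rewrite E.
apply: (@eqv_trans _ _ ((dw k.+2 n ++ [:: sg k]) ++ [:: sg k.+1; sg k] ++ dw 1 k)).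
  rewrite -cat_cons; apply: eqv_catr; apply: comm_word => y /mem_dw [i Hi ->].
  apply: comm_sg => //; lia.
rewrite -!catA /=; apply: eqv_catl.
apply: (@eqv_trans _ _ ([:: sg k.+1; sg k; sg k.+1] ++ dw 1 k)).
  exact: (eqv_catr _ (braid k0 kn)).
rewrite /= -?catA; apply: eqv_cons; apply: eqv_cons.
apply: comm_word => y /mem_dw [i Hi ->].
apply: eqv_sym; apply: comm_sg => //; lia.
Qed.

Lemma tw_last n : 1 < n -> eqv n (sg n.-1 :: delta n) (delta n ++ [:: (n, 1)]).
Proof.
move=> n1.
have E : delta n = sg n.-1 :: dw 1 n.-1.
  by rewrite /delta -{1}(prednK (ltnW n1)) dw_cons //; lia.
rewrite {2}E /=; apply: eqv_cons.
have := @rot2 n 1 n isT n1 (leqnn n); rewrite -/(delta n) => H.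
exact: H.
Qed.

Lemma tau_valid n a : 1 < n -> valid_band n a -> valid_band n (tau n a).
Proof. case: a => t s n1; rewrite /tau /valid_band /=; case: ifP => /=; lia. Qed.

Lemma tw_rel n t s : 0 < s -> s.+1 < t -> t <= n ->
  eqv n [:: tau n (t, t.-1); tau n (t.-1, s)] [:: tau n (t.-1, s); tau n (t, s)].
Proof.
move=> s0 st tn; rewrite /tau /=.
have -> : t.-1 < n by lia.
have -> : t.-1.+1 = t by lia.
case: ifP => tn'.
  apply: eR2c; lia.
have Etn : t = n by lia.
rewrite Etn; apply: eqv_sym; apply: eR2a; lia.
Qed.

Lemma tw_base n s : 1 < n -> 0 < s -> s < n ->
  eqv n ((s.+1, s) :: delta n) (delta n ++ [:: tau n (s.+1, s)]).
Proof.
move=> n1 s0 sn; rewrite /tau /=.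
case: ifP => sn'.
  exact: tw_sg.
have Es : s = n.-1 by lia.
rewrite Es -/(sg n.-1) prednK; last by lia.
exact: tw_last.
Qed.

Lemma tw n t s : 1 < n -> valid_band n (t, s) ->
  eqv n ((t, s) :: delta n) (delta n ++ [:: tau n (t, s)]).
Proof.
move=> n1 /vbP [s0 st tn].
have [d Ed] : exists d, t = s + d.+1 by exists (t - s.+1); lia.
elim: d t Ed st tn => [|d IH] t Ed st tn.
  rewrite Ed addn1; apply: tw_base => //; lia.
pose a := (t.-1, s); pose b := (t, s); pose c := (t, t.-1).
have Ha := IH t.-1 ltac:(lia) ltac:(lia) ltac:(lia).
have Hc : eqv n (c :: delta n) (delta n ++ [:: tau n c]).
  have -> : c = (t.-1.+1, t.-1) by rewrite /c; congr pair; lia.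
  apply: tw_base => //; lia.
have R : eqv n [:: a; b] [:: c; a].
  apply: eqv_sym; apply: eR2c; lia.
apply: (@eqv_cancelx n a).
apply: (@eqv_trans _ _ (c :: a :: delta n)).
  exact: (eqv_catr (delta n) R).
apply: (@eqv_trans _ _ (c :: delta n ++ [:: tau n a])).
  exact: eqv_cons.
apply: (@eqv_trans _ _ ((delta n ++ [:: tau n c]) ++ [:: tau n a])).
  rewrite -cat_cons; exact: eqv_catr.
apply: (@eqv_trans _ _ (delta n ++ [:: tau n a; tau n b])).
  rewrite -catA; apply: eqv_catl; apply: tw_rel; lia.
apply: eqv_sym; rewrite -cat_cons.
apply: (@eqv_trans _ _ ((delta n ++ [:: tau n a]) ++ [:: tau n b])).
  exact: eqv_catr.
rewrite -catA; exact: eqv_refl.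
Qed.

Lemma tw_word n W : 1 < n -> all (valid_band n) W ->
  eqv n (W ++ delta n) (delta n ++ map (tau n) W).
Proof.
move=> n1; elim: W => [|[t s] W IH]; first by move=> _; rewrite cats0; exact: eqv_refl.
rewrite /=; case/andP=> vx vW.
apply: (@eqv_trans _ _ ((t, s) :: delta n ++ map (tau n) W)); first exact: eqv_cons (IH vW).
rewrite -cat_cons; apply: (@eqv_trans _ _ ((delta n ++ [:: tau n (t, s)]) ++ map (tau n) W)).
  apply: eqv_catr; exact: tw.
by rewrite -catA; exact: eqv_refl.
Qed.

Lemma all_tau n W : 1 < n -> all (valid_band n) W -> all (valid_band n) (map (tau n) W).
Proof. move=> n1 /allP H; apply/allP => x /mapP [y yW ->]; exact: tau_valid (H y yW). Qed.

Lemma tw_pow n j W : 1 < n -> all (valid_band n) W ->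
  eqv n (W ++ pw (delta n) j) (pw (delta n) j ++ map (iter j (tau n)) W).
Proof.
move=> n1; elim: j W => [|j IH] W vW.
  by rewrite /= cats0 map_id; exact: eqv_refl.
rewrite pwS catA.
apply: (@eqv_trans _ _ ((delta n ++ map (tau n) W) ++ pw (delta n) j)).
  apply: eqv_catr; exact: tw_word.
rewrite -!catA; apply: eqv_catl.
apply: eqv_trans (IH _ (all_tau n1 vW)) _.
rewrite -map_comp; rewrite (@eq_map _ _ _ (iter j.+1 (tau n))); first exact: eqv_refl.
by move=> x; rewrite [RHS]iterSr.
Qed.

Lemma tau_iter n k t s : t + k <= n -> iter k (tau n) (t, s) = (t + k, s + k).
Proof.
elim: k => [|k IH] tk; first by rewrite !addn0.
rewrite iterS IH; last lia.
by rewrite /tau /= ifT; [rewrite !addnS | lia].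
Qed.

Lemma tau_n n t s : valid_band n (t, s) -> iter n (tau n) (t, s) = (t, s).
Proof.
case/vbP=> s0 st tn.
have S1 : iter (n - t) (tau n) (t, s) = (n, s + (n - t)).
  rewrite tau_iter; [congr pair; lia | lia].
have S2 : tau n (n, s + (n - t)) = ((s + (n - t)).+1, 1) by rewrite /tau /= ltnn.
have S3 : iter (t - s.+1) (tau n) ((s + (n - t)).+1, 1) = (n, (t - s)).
  rewrite tau_iter; [congr pair; lia | lia].
have S4 : tau n (n, t - s) = ((t - s).+1, 1) by rewrite /tau /= ltnn.
have S5 : iter s.-1 (tau n) ((t - s).+1, 1) = (t, s).
  rewrite tau_iter; [congr pair; lia | lia].
have En : n = s.-1 + (1 + (t - s.+1 + (1 + (n - t)))) by lia.
by rewrite {1}En !iterD /= S1 S2 S3 S4 S5.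
Qed.

Definition Dn n := pw (delta n) n.

Lemma central n W : 1 < n -> all (valid_band n) W -> eqv n (W ++ Dn n) (Dn n ++ W).
Proof.
move=> n1 vW; have := tw_pow n n1 vW.
rewrite (@map_id_in _ _ W) // => [[t s] /(allP vW) vx]; exact: tau_n.
Qed.

Lemma delta_valid n : all (valid_band n) (delta n).
Proof. apply/allP => y /mem_dw [i Hi ->]; rewrite /sg /valid_band /=; lia. Qed.

Lemma dw_valid n j k : 0 < j -> k <= n -> all (valid_band n) (dw j k).
Proof. move=> j0 kn; apply/allP => y /mem_dw [i Hi ->]; rewrite /sg /valid_band /=; lia. Qed.

Lemma pw_valid n W k : all (valid_band n) W -> all (valid_band n) (pw W k).
Proof. by move=> vW; elim: k => //= k IH; rewrite all_cat vW. Qed.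

Lemma Dn_valid n : all (valid_band n) (Dn n).
Proof. exact: pw_valid (delta_valid n). Qed.

Lemma central_Dk n W k : 1 < n -> all (valid_band n) W -> eqv n (W ++ pw (Dn n) k) (pw (Dn n) k ++ W).
Proof.
move=> n1 vW; elim: k => [|k IH]; first by rewrite /= cats0; exact: eqv_refl.
rewrite pwS catA; apply: eqv_trans (eqv_catr _ (central n1 vW)) _.
rewrite -!catA; exact: eqv_catl.
Qed.

Definition Ei n i := pw (delta n) (n.-1 - i) ++ dw 1 n.-1 ++ pw (delta n) i.

Lemma Ei_valid n i : all (valid_band n) (Ei n i).
Proof. rewrite /Ei !all_cat !pw_valid ?delta_valid // dw_valid //; lia. Qed.

Lemma sg_div n i : 1 < n -> 0 < i -> i < n -> eqv n (sg i :: Ei n i) (Dn n).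
Proof.
move=> n1 i0 iN.
have vs : all (valid_band n) [:: sg i] by rewrite /= andbT /sg /valid_band /=; lia.
have H := tw_pow (n.-1 - i) n1 vs.
rewrite /= /sg tau_iter in H; last lia.
have E2 : (i.+1 + (n.-1 - i), i + (n.-1 - i)) = sg n.-1 by rewrite /sg; congr pair; lia.
rewrite E2 in H.
have Ed : delta n = sg n.-1 :: dw 1 n.-1.
  by rewrite /delta -{1}(prednK (ltnW n1)) dw_cons //; lia.
rewrite /Ei -cat_cons; apply: eqv_trans (eqv_catr _ H) _.
rewrite -catA cat1s -cat_cons -Ed -pwS pwD.
have -> : n.-1 - i + i.+1 = n by lia.
exact: eqv_refl.
Qed.

Lemma sg_div' n i : 1 < n -> 0 < i -> i < n -> eqv n (Ei n i ++ [:: sg i]) (Dn n).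
Proof.
move=> n1 i0 iN; apply: (@eqv_cancelx n (sg i)).
have vs : all (valid_band n) [:: sg i] by rewrite /= andbT /sg /valid_band /=; lia.
have H := sg_div n1 i0 iN.
rewrite -cat_cons; apply: eqv_trans (eqv_catr _ H) _.
exact: (eqv_sym (central n1 vs)).
Qed.

Section Frac.
Variable n : nat.
Hypothesis n1 : 1 < n.

Definition num (l : nat * bool) : bword * nat :=
  if (0 < l.1) && (l.1 < n) then (if l.2 then ([:: sg l.1], 0) else (Ei n l.1, 1)) else ([::], 0).
Definition img (w : aword) : bword * nat :=
  (flatten [seq (num l).1 | l <- w], sumn [seq (num l).2 | l <- w]).
Definition mul (x y : bword * nat) := (x.1 ++ y.1, x.2 + y.2).

Lemma img_cat u v : img (u ++ v) = mul (img u) (img v).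
Proof. by rewrite /img /mul !map_cat flatten_cat sumn_cat. Qed.

Lemma num_valid l : all (valid_band n) (num l).1.
Proof.
rewrite /num; case: ifP => // /andP[h1 h2]; case: l.2 => //=.
  by rewrite andbT /sg /valid_band /=; lia.
exact: Ei_valid.
Qed.

Lemma img_valid w : all (valid_band n) (img w).1.
Proof. elim: w => //= l w IH; by rewrite all_cat num_valid. Qed.

Definition D := Dn n.

Definition feq (x y : bword * nat) :=
  exists j, eqv n (x.1 ++ pw D (j + y.2)) (y.1 ++ pw D (j + x.2)).

Lemma pw_eq X a b : a = b -> eqv n (X ++ pw D a) (X ++ pw D b).
Proof. move=> ->; exact: eqv_refl. Qed.

Lemma feq_refl x : feq x x.
Proof. by exists 0; exact: eqv_refl. Qed.

Lemma feq_sym x y : feq x y -> feq y x.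
Proof. by move=> [j H]; exists j; exact: eqv_sym. Qed.

Lemma feq_trans x y z : feq x y -> feq y z -> feq x z.
Proof.
case: x y z => [P k] [Q l] [R r] [j1 /= H1] [j2 /= H2].
exists (j1 + j2 + l) => /=.
apply: (@eqv_trans _ _ ((P ++ pw D (j1 + l)) ++ pw D (j2 + r))).
  rewrite -catA pwD; apply: pw_eq; lia.
apply: (@eqv_trans _ _ ((Q ++ pw D (j1 + k)) ++ pw D (j2 + r))).
  exact: eqv_catr.
apply: (@eqv_trans _ _ ((Q ++ pw D (j2 + r)) ++ pw D (j1 + k))).
  rewrite -!catA !pwD; apply: pw_eq; lia.
apply: (@eqv_trans _ _ ((R ++ pw D (j2 + l)) ++ pw D (j1 + k))).
  exact: eqv_catr.
rewrite -catA pwD; apply: pw_eq; lia.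
Qed.

Lemma feq_mulr x x' y : all (valid_band n) y.1 -> feq x x' -> feq (mul x y) (mul x' y).
Proof.
case: x x' y => [P k] [P' k'] [Q l] /= vQ [j /= H].
exists j => /=.
rewrite -!catA.
have E1 : pw D (j + (k' + l)) = pw D (j + k') ++ pw D l by rewrite pwD; congr pw; lia.
have E2 : pw D (j + (k + l)) = pw D (j + k) ++ pw D l by rewrite pwD; congr pw; lia.
rewrite E1 E2 !catA.
apply: (@eqv_trans _ _ ((P ++ pw D (j + k')) ++ Q ++ pw D l)).
  rewrite -!catA; apply: eqv_catl; rewrite !catA; apply: eqv_catr.
  exact: central_Dk.
apply: (@eqv_trans _ _ ((P' ++ pw D (j + k)) ++ Q ++ pw D l)).
  exact: eqv_catr.
rewrite -!catA; apply: eqv_catl; rewrite !catA; apply: eqv_catr.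
exact: eqv_sym (central_Dk _ n1 vQ).
Qed.

Lemma feq_mull x y y' : feq y y' -> feq (mul x y) (mul x y').
Proof.
case: x y y' => [P k] [Q l] [Q' l'] [j /= H].
exists j => /=.
have E1 : pw D (j + (k + l')) = pw D (j + l') ++ pw D k by rewrite pwD; congr pw; lia.
have E2 : pw D (j + (k + l)) = pw D (j + l) ++ pw D k by rewrite pwD; congr pw; lia.
rewrite E1 E2 -!catA; apply: eqv_catl; rewrite !catA; exact: eqv_catr.
Qed.

Lemma eqv_feq P Q : eqv n P Q -> feq (P, 0) (Q, 0).
Proof. by move=> H; exists 0; rewrite /= !cats0. Qed.

Lemma rel_feq l r : artin_rel n l r -> feq (img l) (img r).
Proof.
case=> [i b i1 iN|i j i1 ij jN|i i1 iN]; rewrite /img /num /=.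
- have -> : (0 < i < n) = true by lia.
  case: b => /=; exists 0 => /=; rewrite /pw /= !cats0.
    exact: sg_div.
  exact: sg_div'.
- have -> : (0 < i < n) = true by lia.
  have -> : (0 < j < n) = true by lia.
  apply: eqv_feq; exact: comm_sg.
- have -> : (0 < i < n) = true by lia.
  have -> : (i.+1 < n) = true by lia.
  apply: eqv_feq; exact: braid.
Qed.

Lemma step_feq u v : artin_step n u v -> feq (img u) (img v).
Proof.
case=> p q l r H; rewrite !img_cat.
apply: feq_mull; apply: feq_mulr; first exact: img_valid.
exact: rel_feq.
Qed.

Lemma braid_feq u v : braid_eq n u v -> feq (img u) (img v).
Proof.
elim=> [x y /step_feq //|x|x y _ H|x y z _ H1 _ H2].
- exact: feq_refl.
- exact: feq_sym.
- exact: feq_trans H1 H2.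
Qed.

Lemma dwE_pow j t : 0 < j -> j <= t -> t <= n ->
  eqv n (dw j t ++ flatten [seq Ei n k | k <- iota j (t - j)]) (pw D (t - j)).
Proof.
move=> j0 jt tn.
have : t - j <= t - j by [].
move: {2}(t - j) => m; elim: m j j0 jt => [|m IH] j j0 jt hm.
  have -> : t - j = 0 by lia.
  have -> : t = j by lia.
  rewrite dw_nil /=; exact: eqv_refl.
case: (ltngtP j t) => [jt'|//|Ejt]; last first.
  by rewrite Ejt subnn dw_nil; exact: eqv_refl.
  lia.
have -> : t - j = (t - j.+1).+1 by lia.
rewrite dw_rcons //.
rewrite (_ : iota j (t - j.+1).+1 = j :: iota j.+1 (t - j.+1)) //.
rewrite map_cons [flatten (_ :: _)]/= -catA cat1s.
set F := flatten _.
apply: (@eqv_trans _ _ (dw j.+1 t ++ (D ++ F))).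
  apply: eqv_catl; rewrite -cat_cons; apply: eqv_catr; apply: sg_div => //; lia.
apply: (@eqv_trans _ _ ((dw j.+1 t ++ F) ++ D)).
  rewrite -catA; apply: eqv_catl; apply: eqv_sym; apply: central => //.
  apply/allP => y /flatten_mapP [k _ yk]; exact: (allP (Ei_valid n k)).
rewrite pwSr; apply: eqv_catr; apply: IH => //; lia.
Qed.

Lemma img_cons x w : img (x :: w) = mul (img [:: x]) (img w).
Proof. by rewrite -img_cat. Qed.

Lemma img_pos ks : all (fun k => 0 < k < n) ks ->
  img [seq (k, true) | k <- ks] = ([seq sg k | k <- ks], 0).
Proof.
elim: ks => //= k ks IH /andP[hk hks].
rewrite img_cons IH // /img /num /= hk /=; by [].
Qed.

Lemma img_neg ks : all (fun k => 0 < k < n) ks ->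
  img [seq (k, false) | k <- ks] = (flatten [seq Ei n k | k <- ks], size ks).
Proof.
elim: ks => //= k ks IH /andP[hk hks].
rewrite img_cons IH // /img /num /= hk /= cats0; by [].
Qed.

Lemma img_band t s : valid_band n (t, s) -> feq (img (band_artin t s)) ([:: (t, s)], 0).
Proof.
case/vbP=> s0 st tn.
have hall : all (fun k => 0 < k < n) (iota s.+1 (t.-1 - s)).
  by apply/allP => k; rewrite mem_iota; lia.
rewrite /band_artin !img_cat img_pos ?all_rev // img_neg //.
have -> : img [:: (s, true)] = ([:: sg s], 0).
  rewrite /img /num /=; have -> : (0 < s < n) = true by lia. by [].
rewrite /mul /= size_iota.
exists 0 => /=; rewrite add0n /pw /= cats0 -/(pw D (t.-1 - s)).
have -> : [seq sg k | k <- rev (iota s.+1 (t.-1 - s))] = dw s.+1 t.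
  by rewrite /dw; congr (map _ (rev (iota _ _))); lia.
rewrite -cat1s catA -dw_rcons //.
apply: (@eqv_trans _ _ (((t, s) :: dw s.+1 t) ++ flatten [seq Ei n k | k <- iota s.+1 (t.-1 - s)])).
  apply: eqv_catr; apply: rot1 => //.
rewrite cat_cons /=; apply: eqv_cons.
have -> : t.-1 - s = t - s.+1 by lia.
apply: dwE_pow => //.
Qed.

Lemma img_bword u : all (valid_band n) u -> feq (img (bword_to_artin u)) (u, 0).
Proof.
elim: u => [_|[t s] u IH] /=; first exact: feq_refl.
case/andP=> vx vu.
rewrite /bword_to_artin /= -/(bword_to_artin u) img_cat.
apply: (@feq_trans _ (mul ([:: (t, s)], 0) (img (bword_to_artin u)))).
  apply: feq_mulr; [exact: img_valid | exact: img_band].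
have -> : ((t, s) :: u, 0) = mul ([:: (t, s)], 0) (u, 0) by [].
apply: feq_mull; exact: IH.
Qed.

End Frac.

Lemma eqv_cancel_prefix n P U V : eqv n (P ++ U) (P ++ V) -> eqv n U V.
Proof. elim: P => //= x P IH H; apply: IH; exact: eqv_cancelx H. Qed.

Theorem theorem2p6 (n : nat) (u v : bword) :
  valid_bword n u -> valid_bword n v ->
  braid_eq n (bword_to_artin u) (bword_to_artin v) ->
  pos_equiv n u v.
Proof.
move=> vu vv H.
case: (leqP n 1) => [n1|n1].
  have E : forall w, valid_bword n w -> w = [::].
    case=> // [[t s] w] /= /andP[/vbP [? ? ?] _]; lia.
  rewrite (E u vu) (E v vv); exact: rst_refl.
have Hu := img_bword n1 vu.
have Hv := img_bword n1 vv.
have := feq_trans n1 (feq_sym Hu) (feq_trans n1 (braid_feq n1 H) Hv).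
case=> j /=; rewrite addn0 => Hj.
apply: eqv_pos.
apply: (@eqv_cancel_prefix n (pw (Dn n) j)).
apply: eqv_trans (eqv_sym (central_Dk j n1 vu)) _.
apply: eqv_trans Hj _.
exact: central_Dk.
Qed.
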